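(* Consider a market in which every hospital's utility is proportional to total wage, i.e. for each $h\in H$ there is $\gamma_h>0$ with $f_h(Y)=\gamma_h w_h(Y)$ for all $Y\subseteq X_h$. For each $h$, let $\mathrm{Ch}_h$ be the choice function that, given $X'\subseteq X_h$ (with $\mathrm{Ch}_h(\emptyset)=\emptyset$), sorts $X'$ in non-decreasing order of wage (ties broken by a fixed order) as $x^{(1)},\dots,x^{(|X'|)}$, starts with $Y=\emptyset$, for $i=1,\dots,|X'|-1$ adds $x^{(i)}$ to $Y$ if $w_h(Y\cup\{x^{(i)}\})<B_h$, then adds $x^{(|X'|)}$ and returns $Y$. Then the generalized deferred acceptance mechanism with these choice functions is strategy-proof for doctors and produces a $B'_H$-stable matching for some $B'_H$ with $B_h\le B'_h<B_h+\overline{w}_h$ for every $h\in H$.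
   Context: A market consists of a finite set of doctors $D$, a finite set of hospitals $H$, a finite set of contracts $X\subseteq D\times H\times\mathbb{R}_{>0}$ (contract $x=(d,h,w)$ has doctor $x_D=d$, hospital $x_H=h$, wage $x_W=w$), strict preferences $\succ_d$ of each doctor $d$ over $X_d\cup\{\emptyset\}$, utilities $f_h$ of each hospital on subsets of $X_h$, and budgets $B_h>0$ with $0<x_W\le B_h$ for all $x\in X_h$. For $Y\subseteq X$: $Y_d=\{x\in Y:x_D=d\}$, $Y_h=\{x\in Y:x_H=h\}$, $w_h(Y)=\sum_{x\in Y_h}x_W$; $\overline{w}_h=\max_{x\in X_h}x_W$. A matching is $Y\subseteq X$ with $|Y_d|\le1$ for all $d$. Given $B'_H=(B'_h)_h$, a matching $Y$ is $B'_H$-feasible if $w_h(Y)\le B'_h$ for all $h$; a matching $Z\subseteq X_h$ blocks $Y$ if every doctor $x_D$ with $x\in Z\setminus Y$ strictly prefers $x$ to her contract in $Y$ (or to $\emptyset$), $f_h(Z)>f_h(Y_h)$ and $w_h(Z)\le B'_h$; $Y$ is $B'_H$-stable if it is $B'_H$-feasible and not blocked by any $h$ and $Z\subseteq X_h$. Generalized deferred acceptance with hospital choice functions $\mathrm{Ch}_h$: let $\mathrm{Ch}_H(Y)=\bigcup_h\mathrm{Ch}_h(Y_h)$; $\mathrm{Ch}_d(Y)=\{x\}$ for the $\succ_d$-best $x\in Y_d$ if $x\succ_d\emptyset$, else $\emptyset$; $\mathrm{Ch}_D(Y)=\bigcup_d\mathrm{Ch}_d(Y_d)$. Set $R^{(0)}=\emptyset$;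 for $i=1,2,\dots$: $Y^{(i)}=\mathrm{Ch}_D(X\setminus R^{(i-1)})$, $Z^{(i)}=\mathrm{Ch}_H(Y^{(i)})$, $R^{(i)}=R^{(i-1)}\cup(Y^{(i)}\setminus Z^{(i)})$; if $Y^{(i)}=Z^{(i)}$, output $Y^{(i)}$. This is a mechanism mapping reported doctor preference profiles to matchings; it is strategy-proof for doctors if for every doctor $d$, every profile $\succ_D$ and every alternative report $\succ'_d$, the outcome of $d$ under $\succ_D$ is weakly $\succ_d$-preferred to her outcome under $(\succ'_d,\succ_{-d})$. *)

(* Defs.v *)
From HB Require Import structures.
From mathcomp Require Import all_boot all_order all_algebra.
Set Implicit Arguments. Unset Strict Implicit. Unset Printing Implicit Defensive.
Import Order.TTheory GRing.Theory Num.Theory.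
Local Open Scope ring_scope.

Section Market.
Variables (R : realFieldType) (D H C : finType).
Variables (cD : C -> D) (cH : C -> H) (wage : C -> R).

(* the domain X_d ∪ {∅} of doctor d's preferences; None stands for ∅ *)
Definition pref_dom (d : D) (a : option C) : bool :=
  if a is Some x then cD x == d else true.

(* p a b  means  a ≻_d b ;  p is a strict (total) preference on X_d ∪ {∅} *)
Definition strict_pref (d : D) (p : rel (option C)) : Prop :=
  [/\ (forall a, pref_dom d a -> ~~ p a a),
      (forall a b c, pref_dom d a -> pref_dom d b -> pref_dom d c ->
          p a b -> p b c -> p a c) &
      (forall a b, pref_dom d a -> pref_dom d b -> a != b -> p a b || p b a)].

Definition profile := D -> rel (option C).

Definition valid_profile (P : profile) : Prop := forall d, strict_pref d (P d).

Definition update (P : profile) (d : D) (p : rel (option C)) : profile :=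
  fun d' => if d' == d then p else P d'.

Definition restrH (h : H) (Y : {set C}) : {set C} := [set x in Y | cH x == h].
Definition wsum (h : H) (Y : {set C}) : R := \sum_(x in Y | cH x == h) wage x.
Definition wbar (h : H) : R := \big[Num.max/0]_(x | cH x == h) wage x.

Definition is_matching (Y : {set C}) : Prop :=
  forall d, (#|[set x in Y | cD x == d]| <= 1)%N.

Definition outcome (Y : {set C}) (d : D) : option C := [pick x in Y | cD x == d].

Definition best (P : profile) (Y : {set C}) (d : D) : option C :=
  [pick x | [&& x \in Y, cD x == d &
     [forall y, ((y \in Y) && (cD y == d) && (y != x)) ==> P d (Some x) (Some y)]]].

Definition chd (P : profile) (Y : {set C}) (d : D) : {set C} :=
  if best P Y d is Some x then (if P d (Some x) None then [set x] else set0)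
  else set0.

Definition chD (P : profile) (Y : {set C}) : {set C} := \bigcup_d chd P Y d.

Variables (B : H -> R) (tb : C -> nat).

Definition wage_order : rel C :=
  fun x y => (wage x < wage y) || ((wage x == wage y) && (tb x <= tb y)%N).

Definition chh (h : H) (X' : {set C}) : {set C} :=
  match sort wage_order (enum (restrH h X')) with
  | [::] => set0
  | x0 :: s' =>
      last x0 s' |:
        foldl (fun Y x => if wsum h (x |: Y) < B h then x |: Y else Y)
              set0 (belast x0 s')
  end.

Definition chH (Y : {set C}) : {set C} := \bigcup_h chh h (restrH h Y).

(* Since Z ⊆ Y, the rejected
   set strictly grows, so #|C|.+1 rounds always suffice; the fuel is never
   exhausted (the set0 default is never reached). *)
Fixpoint gda_loop (P : profile) (fuel : nat) (Rj : {set C}) : {set C} :=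
  match fuel with
  | O => set0
  | S n =>
      let Y := chD P (~: Rj) in
      let Z := chH Y in
      if Y == Z then Y else gda_loop P n (Rj :|: (Y :\: Z))
  end.

Definition gda (P : profile) : {set C} := gda_loop P #|C|.+1 set0.

Variable f : H -> {set C} -> R.

Definition feasible (B' : H -> R) (Y : {set C}) : Prop :=
  is_matching Y /\ forall h, wsum h Y <= B' h.

Definition blocks (P : profile) (B' : H -> R) (Y : {set C}) (h : H) (Z : {set C}) : Prop :=
  [/\ is_matching Z, (forall x, x \in Z -> cH x = h),
      (forall x, x \in Z -> x \notin Y -> P (cD x) (Some x) (outcome Y (cD x))),
      f h (restrH h Y) < f h Z & wsum h Z <= B' h].

Definition stable (P : profile) (B' : H -> R) (Y : {set C}) : Prop :=
  feasible B' Y /\ forall h Z, ~ blocks P B' Y h Z.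

Definition strategy_proof (M : profile -> {set C}) : Prop :=
  forall (P : profile) (d : D) (p' : rel (option C)),
    valid_profile P -> strict_pref d p' ->
    let a := outcome (M P) d in
    let b := outcome (M (update P d p')) d in
    a = b \/ P d a b.

End Market.

(* Main.v *)
Require Import Defs.
From HB Require Import structures.
From mathcomp Require Import all_boot all_order all_algebra.
Import Order.TTheory GRing.Theory Num.Theory.
Local Open Scope ring_scope.
Set Implicit Arguments. Unset Strict Implicit. Unset Printing Implicit Defensive.
Set Warnings "-notation-overridden -ambiguous-paths".

Section Part1.
Variables (R : realFieldType) (H C : finType) (cH : C -> H) (wage : C -> R)
  (B : H -> R) (tb : C -> nat) (D : finType) (cD : C -> D).
Hypothesis wpos : forall x, 0 < wage x.
Hypothesis tbinj : injective tb.
Hypothesis Bpos : forall h, 0 < B h.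
Implicit Types (S Y T Rj : {set C}).

Local Notation le := (wage_order wage tb).
Local Notation ws := (wsum cH wage).

Lemma leo_refl x : le x x.
Proof. by rewrite /wage_order eqxx leqnn orbT. Qed.

Lemma leo_total x y : le x y || le y x.
Proof.
rewrite /wage_order; case: (ltgtP (wage x) (wage y)) => //= _.
by rewrite leq_total.
Qed.

Lemma leo_trans : transitive le.
Proof.
move=> y x z; rewrite /wage_order => /orP[h1|/andP[/eqP e1 h1]] /orP[h2|/andP[/eqP e2 h2]].
- by rewrite (lt_trans h1 h2).
- by rewrite -e2 h1.
- by rewrite e1 h2.
- by rewrite e1 e2 eqxx (leq_trans h1 h2) orbT.
Qed.

Lemma leo_anti x y : le x y -> le y x -> x = y.
Proof.
rewrite /wage_order => /orP[h1|/andP[/eqP e1 h1]] /orP[h2|/andP[/eqP e2 h2]].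
- by move: (lt_trans h1 h2); rewrite ltxx.
- by move: h1; rewrite e2 ltxx.
- by move: h2; rewrite e1 ltxx.
- by apply: tbinj; apply/eqP; rewrite eqn_leq h1 h2.
Qed.

Lemma le_wage x y : le x y -> wage x <= wage y.
Proof. by rewrite /wage_order => /orP[/ltW|/andP[/eqP -> _]]. Qed.

Lemma ws_ge0 h T : 0 <= ws h T.
Proof. by apply: sumr_ge0 => x _; apply: ltW. Qed.

Lemma ws_le h (T T' : {set C}) :
  (forall x, x \in T -> cH x = h -> x \in T') -> ws h T <= ws h T'.
Proof.
move=> sub; rewrite /wsum [X in X <= _]big_mkcond [X in _ <= X]big_mkcond /=.
apply: ler_sum => x _; case: ifP => [/andP[xT /eqP xh]|_].
  by rewrite (sub x xT xh) xh eqxx lexx.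
by case: ifP => // _; apply: ltW.
Qed.

Lemma ws_U1 h (T : {set C}) x : x \notin T -> cH x = h -> ws h (x |: T) = wage x + ws h T.
Proof.
move=> xT xh; rewrite /wsum (bigD1 x) /=; last by rewrite setU11 xh eqxx.
congr (_ + _); apply: eq_bigl => y; rewrite in_setU1.
case: (eqVneq y x) => [->|] /=; first by rewrite (negbTE xT) andbF.
by rewrite andbT.
Qed.

Lemma ws_U1_le h (T : {set C}) x : ws h (x |: T) <= wage x + ws h T.
Proof.
case xT: (x \in T).
  have ->: x |: T = T by apply/setP=> y; rewrite in_setU1; case: eqP => // ->.
  by rewrite lerDr ltW.
case: (eqVneq (cH x) h) => [xh|xh]; first by rewrite ws_U1 ?xT.
have ->: ws h (x |: T) = ws h T.
  apply: eq_bigl => y; rewrite in_setU1; case: eqP => //= ->.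
  by rewrite xT (negbTE xh).
by rewrite lerDr ltW.
Qed.

Definition stepf h := (fun (Y : {set C}) x => if ws h (x |: Y) < B h then x |: Y else Y).

Lemma fold_spec h (l : seq C) : uniq l -> pairwise le l -> all (fun x => cH x == h) l ->
  let G := foldl (stepf h) set0 l in
  [/\ G = [set x | (x \in l) && (ws h [set y | (y \in l) && le y x] < B h)],
      ws h G < B h &
      (G = [set x | x \in l] \/ forall w, (forall y, y \in l -> wage y <= wage w) ->
          B h <= ws h G + wage w)].
Proof.
elim/last_ind: l => [|l0 z IH].
  move=> _ _ _ /=; split.
  - by apply/setP=> x; rewrite !inE.
  - by rewrite /wsum big_pred0 // => x; rewrite inE.
  - by left; apply/setP=> x; rewrite !inE.
rewrite rcons_uniq -cats1 pairwise_cat all_cat /= !andbT => /andP[zl0 ul0]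
  /andP[/allrelP al pl0] /andP[hl0 /eqP zh] /=.
rewrite foldl_cat /=.
have [G0E G0B G0D] := IH ul0 pl0 hl0.
set G0 := foldl _ _ l0 in G0E G0B G0D *.
have lz : forall y, y \in l0 -> le y z by move=> y yl; apply: al; rewrite ?inE.
have nlz : forall y, y \in l0 -> ~~ le z y.
  move=> y yl; apply/negP=> zy; have := leo_anti (lz y yl) zy => yz.
  by move: zl0; rewrite -yz yl.
have G0l0 : forall x, x \in G0 -> x \in l0 by move=> x; rewrite G0E inE => /andP[].
have zG0 : z \notin G0 by apply/negP=> /G0l0; rewrite (negbTE zl0).
have psE : forall y, y \in l0 ->
   [set y' | (y' \in l0 ++ [:: z]) && le y' y] = [set y' | (y' \in l0) && le y' y].
  move=> y yl; apply/setP=> y'; rewrite !inE mem_cat inE.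
  by case: (eqVneq y' z) => [->|] /=; [rewrite (negbTE (nlz y yl)) (negbTE zl0) | rewrite orbF].
have pszE : [set y' | (y' \in l0 ++ [:: z]) && le y' z] = z |: [set y | y \in l0].
  apply/setP=> y'; rewrite !inE mem_cat inE.
  case: (eqVneq y' z) => [->|] /=; first by rewrite leo_refl orbT.
  by rewrite orbF; case yl: (y' \in l0) => //=; rewrite lz.
have zl0' : z \notin [set y | y \in l0] by rewrite inE.
have wsG0 : ws h G0 <= ws h [set y | y \in l0].
  by apply: ws_le => x /G0l0; rewrite inE.
have key : (ws h (z |: G0) < B h) = (wage z + ws h [set y | y \in l0] < B h).
  rewrite ws_U1 //; case: G0D => [->//|G0D].
  have := G0D z (fun y yl => le_wage (lz y yl)).
  rewrite addrC => h1; apply/idP/idP => h2.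
    by move: (le_lt_trans h1 h2); rewrite ltxx.
  by move: (le_lt_trans h1 (le_lt_trans (lerD (lexx _) wsG0) h2)); rewrite ltxx.
rewrite /stepf key; case: ifP => hk.
- split.
  + apply/setP=> x; rewrite !inE mem_cat inE.
    case: (eqVneq x z) => [->|xz] /=; first by rewrite pszE ws_U1 // hk orbT.
    rewrite orbF G0E inE; case xl: (x \in l0) => //=; by rewrite psE.
  + by rewrite -key in hk.
  + case: G0D => [G0l|G0D].
      by left; apply/setP=> x; rewrite !inE mem_cat inE G0l inE orbC.
    have := G0D z (fun y yl => le_wage (lz y yl)).
    rewrite -key ws_U1 // in hk; rewrite addrC => h1.
    by move: (le_lt_trans h1 hk); rewrite ltxx.
- split.
  + apply/setP=> x; rewrite !inE mem_cat inE.
    case: (eqVneq x z) => [->|xz] /=; first by rewrite (negbTE zG0) pszE ws_U1 // hk orbT.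
    rewrite orbF G0E inE; case xl: (x \in l0) => //=; by rewrite psE.
  + exact: G0B.
  + right=> w hw; rewrite -key ws_U1 // in hk; move/negbT: hk; rewrite -leNgt => hk.
    apply: (le_trans hk); rewrite addrC lerD2l; apply: hw.
    by rewrite mem_cat inE eqxx orbT.
Qed.

Definition maxin h (S : {set C}) x := [forall y, ((y \in S) && (cH y == h)) ==> le y x].
Definition pre (S : {set C}) x := [set y in S | le y x].

Lemma wage_wbar x : wage x <= wbar cH wage (cH x).
Proof. by rewrite /wbar; apply: le_bigmax_cond. Qed.

Lemma wbar_ge0 h : 0 <= wbar cH wage h.
Proof.
rewrite /wbar; apply: (big_ind (fun v => 0 <= v)) => //.
- by move=> a b a0 b0; rewrite le_max a0.
- by move=> x _; apply: ltW.
Qed.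

Lemma chh_spec h S : let Ch := chh cH wage B tb h S in
  [/\ (forall x, x \in Ch = [&& x \in S, cH x == h & maxin h S x || (ws h (pre S x) < B h)]),
      ws h Ch < B h + wbar cH wage h &
      (B h <= ws h S -> B h <= ws h Ch)].
Proof.
rewrite /chh.
set s := sort le (enum (restrH cH h S)).
have us : uniq s by rewrite sort_uniq enum_uniq.
have ms : forall x, (x \in s) = (x \in S) && (cH x == h).
  by move=> x; rewrite mem_sort mem_enum /restrH inE.
have ps : pairwise le s by rewrite -(sorted_pairwise leo_trans) sort_sorted // => x y; apply: leo_total.
have hs : all (fun x => cH x == h) s by apply/allP=> x; rewrite ms => /andP[].
case Hs: s => [|x0 s'] /=.
  split.
  - by move=> x; rewrite inE; have := ms x; rewrite Hs in_nil; case: (x \in S); case: (cH x == h).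
  - rewrite /wsum big_pred0; last by move=> x; rewrite inE.
    by rewrite ltr_wpDr // wbar_ge0.
  - move=> hB; exfalso; move: (lt_le_trans (Bpos h) hB).
    rewrite /wsum big_pred0 ?ltxx // => x; have := ms x; rewrite Hs in_nil => <- //.
set m := last x0 s'; set bl := belast x0 s'.
have sE : s = rcons bl m by rewrite Hs lastI.
rewrite sE in us ps hs ms.
move: us ps hs; rewrite rcons_uniq -cats1 pairwise_cat all_cat /= !andbT.
move=> /andP[mbl ubl] /andP[/allrelP al pbl] /andP[hbl /eqP mh].
have [GE GB GD] := fold_spec ubl pbl hbl.
rewrite /stepf in GE GB GD.
set G := foldl _ set0 bl in GE GB GD *.
have blm : forall y, y \in bl -> le y m by move=> y yl; apply: al; rewrite ?inE.
have nml : forall y, y \in bl -> ~~ le m y.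
  move=> y yl; apply/negP=> zy; have := leo_anti (blm y yl) zy => yz.
  by move: mbl; rewrite -yz yl.
have mS : (m \in S) && (cH m == h) by rewrite -ms mem_rcons inE eqxx.
have Gbl : forall x, x \in G -> x \in bl by move=> x; rewrite GE inE => /andP[].
have mG : m \notin G by apply/negP=> /Gbl; rewrite (negbTE mbl).
split.
- move=> x; rewrite in_setU1 GE inE.
  case: (eqVneq x m) => [->|xm] /=.
    rewrite andbA mS /= /maxin; apply/esym/orP; left; apply/forallP=> y; apply/implyP.
    rewrite -ms mem_rcons inE => /orP[/eqP->|/blm //]; exact: leo_refl.
  case xbl: (x \in bl) => /=; last first.
    by have := ms x; rewrite mem_rcons inE (negbTE xm) xbl /= andbA => <-.
  have := ms x; rewrite mem_rcons inE xbl orbT andbA => <- /=.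
  have -> : maxin h S x = false.
    apply/negbTE/negP=> /forallP /(_ m); rewrite mS /= => mx.
    by move: (nml x xbl); rewrite mx.
  congr (_ < _); apply: eq_bigl => y; rewrite !inE.
  case: (eqVneq y m) => [->|ym].
    by rewrite (negbTE (nml x xbl)) (negbTE mbl) !andbF.
  case ybl: (y \in bl); last first.
    have := ms y; rewrite mem_rcons inE (negbTE ym) ybl /= => e.
    by case: (y \in S) (cH y == h) e => [] [] //= _; rewrite andbF.
  have := ms y; rewrite mem_rcons inE ybl orbT => /esym/andP[-> ->].
  by rewrite /= andbT.
- apply: (le_lt_trans (ws_U1_le _ _ _)); rewrite addrC; apply: ltr_leD => //.
  by rewrite -mh wage_wbar.
- move=> hB; case: GD => [GE'|GD].
    suff -> : ws h (m |: G) = ws h S by [].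
    apply: eq_bigl => y; rewrite in_setU1 GE' inE.
    have := ms y; rewrite mem_rcons inE => <-.
    case: (eqVneq y m) => [->|_] /=; first by rewrite mh eqxx.
    by case ybl: (y \in bl) => //=; apply: (allP hbl).
  rewrite ws_U1 // addrC; apply: GD => y.
  by move/blm/le_wage.
Qed.

Local Notation Ch := (chh cH wage B tb).

Lemma chh_char h (S : {set C}) x :
  x \in Ch h S = [&& x \in S, cH x == h & maxin h S x || (ws h (pre S x) < B h)].
Proof. by have [] := chh_spec h S. Qed.

Lemma chh_sub h S x : x \in Ch h S -> x \in S /\ cH x = h.
Proof. by rewrite chh_char => /and3P[-> /eqP ->]. Qed.

Lemma chh_ext h (S S' : {set C}) : (forall x, cH x = h -> (x \in S) = (x \in S')) -> Ch h S = Ch h S'.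
Proof.
move=> e; apply/setP=> x; rewrite !chh_char.
case: (eqVneq (cH x) h) => [xh|]; last by rewrite !andbF.
rewrite (e x xh); congr [&& _, _ & _ || _].
- apply: eq_forallb => y; case: (eqVneq (cH y) h) => [yh|]; last by rewrite !andbF.
  by rewrite e.
- congr (_ < _); apply: eq_bigl => y; rewrite !inE.
  by case: (eqVneq (cH y) h) => [yh|]; [rewrite e | rewrite !andbF].
Qed.

Lemma ws_addin h (T T' : {set C}) x :
  (forall y, y \in T -> cH y = h -> y \in T') -> x \in T' -> x \notin T -> cH x = h ->
  ws h T + wage x <= ws h T'.
Proof.
move=> sub xT' xT xh; rewrite addrC -ws_U1 //; apply: ws_le => y.
by rewrite in_setU1 => /orP[/eqP->//|/sub].
Qed.

Lemma chh_subst h (S S' : {set C}) x : (forall y, y \in S -> cH y = h -> y \in S') ->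
  x \in S -> x \in Ch h S' -> x \in Ch h S.
Proof.
move=> sub xS; rewrite !chh_char xS => /and3P[_ -> /orP[mx|px]] /=.
  apply/orP; left; apply/forallP=> y; apply/implyP=> /andP[yS yh].
  by move/forallP: mx => /(_ y); rewrite (sub y yS (eqP yh)) yh.
apply/orP; right; apply: le_lt_trans px; apply: ws_le => y; rewrite !inE => /andP[yS ->] yh.
by rewrite (sub y yS yh).
Qed.

Lemma chh_small h S : ws h S < B h -> Ch h S = restrH cH h S.
Proof.
move=> hS; apply/setP=> x; rewrite chh_char /restrH inE.
case: (x \in S) (eqVneq (cH x) h) => [] [xh|] //=; rewrite ?andbF //.
rewrite ?eqxx /=; apply/orP; right; apply: le_lt_trans hS; apply: ws_le => y.
by rewrite inE => /andP[].
Qed.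

Lemma chh_big h S : B h <= ws h S -> B h <= ws h (Ch h S).
Proof. by have [] := chh_spec h S. Qed.

Lemma chh_bound h S : ws h (Ch h S) < B h + wbar cH wage h.
Proof. by have [] := chh_spec h S. Qed.

Lemma maxinU h (S : {set C}) z x : cH z = h -> maxin h (z |: S) x = le z x && maxin h S x.
Proof.
move=> zh; rewrite /maxin; apply/forallP/andP.
  move=> H1; split; first by have := H1 z; rewrite setU11 zh eqxx.
  apply/forallP=> y; apply/implyP=> /andP[yS yh]; have := H1 y.
  by rewrite in_setU1 yS orbT yh.
move=> [zx /forallP H1] y; apply/implyP; rewrite in_setU1 => /andP[/orP[/eqP->//|yS] yh].
by have := H1 y; rewrite yS yh.
Qed.

Lemma wspreU h (S : {set C}) z x : z \notin S -> cH z = h ->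
  ws h (pre (z |: S) x) = (if le z x then wage z else 0) + ws h (pre S x).
Proof.
move=> zS zh; case: ifP => zx.
  rewrite -ws_U1 //; last by rewrite inE (negbTE zS).
  by congr ws; apply/setP=> y; rewrite !inE; case: eqP => // ->; rewrite zx.
rewrite add0r; congr ws; apply/setP=> y; rewrite !inE; case: eqP => // ->.
by rewrite zx (negbTE zS).
Qed.

Lemma lad1 h (S : {set C}) z : z \notin S -> (#|Ch h S| <= #|Ch h (z |: S)|)%N.
Proof.
move=> zS; case: (eqVneq (cH z) h) => [zh|zh]; last first.
  rewrite (chh_ext (S' := z |: S)) // => x xh; rewrite in_setU1.
  by case: eqP => // xz; move: zh; rewrite -xz xh eqxx.
set C1 := Ch h S; set C2 := Ch h (z |: S).
have [sub|] := boolP (C1 \subset C2); first exact: subset_leq_card.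
case/subsetPn=> x xC1 xC2.
have drop : forall x', x' \in C1 -> x' \notin C2 ->
   [/\ x' \in S, cH x' = h, maxin h S x' || (ws h (pre S x') < B h),
       ~~ maxin h (z |: S) x' & B h <= ws h (pre (z |: S) x')].
  move=> x' h1 h2; move: h1 h2; rewrite /C1 /C2 !chh_char in_setU1 => /and3P[x'S x'h ->].
  rewrite x'S orbT x'h /= negb_or -leNgt => /andP[-> ->]; by split => //; apply/eqP.
have fa : forall x', x' \in S -> maxin h S x' -> ~~ maxin h (z |: S) x' -> ~~ le z x'.
  by move=> x' _ m1; rewrite maxinU // m1 andbT.
have fb : forall x', x' \in S -> ws h (pre S x') < B h -> B h <= ws h (pre (z |: S) x') -> le z x'.
  move=> x' _ p1; rewrite wspreU //; case: ifP => // _; rewrite add0r => p2.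
  by move: (le_lt_trans p2 p1); rewrite ltxx.
have zx_ne : forall x', x' \in S -> x' != z by move=> x' x'S; apply/eqP=> e; move: zS; rewrite -e x'S.
have zC2 : z \in C2.
  have [xS xh c1 nm2 p2] := drop x xC1 xC2.
  rewrite /C2 chh_char setU11 zh eqxx /=.
  case/orP: c1 => [mx|px].
    have nzx := fa x xS mx nm2.
    apply/orP; left; rewrite maxinU // leo_refl /=; apply/forallP=> y; apply/implyP=> /andP[yS yh].
    have xz : le x z by have := leo_total z x; rewrite (negbTE nzx).
    by apply: leo_trans xz; move/forallP: mx => /(_ y); rewrite yS yh.
  have zx := fb x xS px p2.
  apply/orP; right; rewrite wspreU // leo_refl.
  apply: le_lt_trans px; apply: le_trans (ws_addin (T := pre S z) (T' := pre S x) (x := x) _ _ _ xh).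
  - by rewrite addrC lerD2l le_wage.
  - by move=> y; rewrite !inE => /andP[-> yz] _; apply: leo_trans yz zx.
  - by rewrite inE xS leo_refl.
  - rewrite inE xS /=; apply/negP=> xz; have := leo_anti xz zx => e.
    by move: (zx_ne x xS); rewrite e eqxx.
have uniq1 : forall x1 x2, x1 \in C1 -> x1 \notin C2 -> x2 \in C1 -> x2 \notin C2 ->
    le x1 x2 -> x1 = x2.
  move=> x1 x2 a1 b1 a2 b2 l12; apply/eqP/negPn/negP=> ne.
  have [x1S x1h c1 nm1 p1] := drop x1 a1 b1.
  have [x2S x2h c2 nm2 p2] := drop x2 a2 b2.
  have n21 : ~~ le x2 x1 by apply/negP=> l21; move: ne; rewrite (leo_anti l12 l21) eqxx.
  have nmax1 : ~~ maxin h S x1.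
    by apply/negP=> /forallP /(_ x2); rewrite x2S x2h eqxx /= (negbTE n21).
  rewrite (negbTE nmax1) /= in c1.
  have zx1 := fb x1 x1S c1 p1.
  have zx2 := leo_trans zx1 l12.
  case/orP: c2 => [mx2|px2].
    by move: (fa x2 x2S mx2 nm2); rewrite zx2.
  move: p1; rewrite wspreU // zx1 => p1.
  have : ws h (pre S x1) + wage x2 <= ws h (pre S x2).
    apply: ws_addin => //.
    - by move=> y; rewrite !inE => /andP[-> yx] _; apply: leo_trans yx l12.
    - by rewrite inE x2S leo_refl.
    - by rewrite inE x2S.
  move=> q; have r : wage z + ws h (pre S x1) <= ws h (pre S x2).
    by apply: le_trans q; rewrite addrC lerD2l le_wage.
  by move: (le_lt_trans (le_trans p1 r) px2); rewrite ltxx.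
have only : forall y, y \in C1 -> y \notin C2 -> y = x.
  move=> y a b; have := leo_total y x; case/orP => l.
    exact: uniq1 a b xC1 xC2 l.
  by apply/esym; apply: uniq1 xC1 xC2 a b l.
rewrite (cardsD1 x C1) (cardsD1 z C2) xC1 zC2 add1n ltnS.
apply: subset_leq_card; apply/subsetP=> y; rewrite !inE => /andP[yx yC1].
have [yS _] := chh_sub yC1.
rewrite (zx_ne y yS) /=; apply/negPn/negP=> yC2.
by move: (only y yC1 yC2) yx => ->; rewrite eqxx.
Qed.

Lemma lad h (S S' : {set C}) : S \subset S' -> (#|Ch h S| <= #|Ch h S'|)%N.
Proof.
move eqn : #|S' :\: S| => n; elim: n S eqn => [|n IH] S eqn sub.
  have -> : S' = S.
    apply/eqP; rewrite eqEsubset sub andbT; apply/subsetP=> x xS'.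
    apply/negPn/negP=> xS; move: eqn => /eqP; rewrite cards_eq0 => /eqP /setP /(_ x).
    by rewrite !inE xS xS'.
  by [].
have : (0 < #|S' :\: S|)%N by rewrite eqn.
case/card_gt0P=> z; rewrite inE => /andP[zS zS'].
apply: leq_trans (lad1 h zS) _; apply: IH.
  move: eqn; rewrite (cardsD1 z (S' :\: S)) inE zS zS' add1n => -[<-].
  by congr (#|pred_of_set _|); apply/setP=> y; rewrite !inE; case: eqP.
by apply/subsetP=> y; rewrite in_setU1 => /orP[/eqP->//|/(subsetP sub)].
Qed.

Lemma sandwich h (S T : {set C}) : Ch h S \subset T -> T \subset S -> Ch h T = Ch h S.
Proof.
move=> s1 s2; apply/eqP; rewrite eq_sym eqEcard lad // andbT.
apply/subsetP=> x xC; apply: chh_subst (subsetP s1 x xC) xC.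
by move=> y /(subsetP s2).
Qed.

Section SP.
Variables (d : D) (p : rel (option C)).
Hypothesis sp : strict_pref cD d p.

Lemma sp_irr a : pref_dom cD d a -> ~~ p a a.
Proof. by case: sp => h _ _; apply: h. Qed.

Lemma sp_trans a b c : pref_dom cD d a -> pref_dom cD d b -> pref_dom cD d c ->
  p a b -> p b c -> p a c.
Proof. by case: sp => _ h _; apply: h. Qed.

Lemma sp_asym a b : pref_dom cD d a -> pref_dom cD d b -> p a b -> p b a -> False.
Proof.
move=> da db ab ba; have := sp_trans da db da ab ba.
by rewrite (negbTE (sp_irr da)).
Qed.

Lemma sp_tot a b : pref_dom cD d a -> pref_dom cD d b -> a != b -> p a b || p b a.
Proof. by case: sp => _ _ h; apply: h. Qed.
End SP.

Lemma domS e x : cD x = e -> pref_dom cD e (Some x).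
Proof. by move=> <-; rewrite /pref_dom eqxx. Qed.

Lemma domN e : pref_dom cD e None.
Proof. by []. Qed.

Hint Resolve domN : core.

Section Doc.
Variable Q : profile D C.
Hypothesis vQ : valid_profile cD Q.

Lemma best_some S e x : best cD Q S e = Some x ->
  [/\ x \in S, cD x = e & forall y, y \in S -> cD y = e -> y != x -> Q e (Some x) (Some y)].
Proof.
rewrite /best; case: pickP => // x' /and3P[xS /eqP xd /forallP Hx] [<-]; split => //.
by move=> y yS yd yx; move: (Hx y); rewrite yS yd eqxx yx.
Qed.

Lemma chD_mem S x : x \in chD cD Q S = [&& x \in S, Q (cD x) (Some x) None &
   [forall y, ((y \in S) && (cD y == cD x) && (y != x)) ==> Q (cD x) (Some x) (Some y)]].
Proof.
apply/bigcupP/idP.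
  move=> [e _]; rewrite /chd; case E: best => [x'|]; last by rewrite inE.
  have [x'S x'e Hb] := best_some E.
  case: ifP => acc; last by rewrite inE.
  rewrite inE => /eqP ->; rewrite x'S x'e acc /=; apply/forallP=> y; apply/implyP.
  by move=> /andP[/andP[yS /eqP ye] yx]; apply: Hb.
move=> /and3P[xS acc /forallP Hx]; exists (cD x) => //; rewrite /chd /best.
case: pickP => [x' /and3P[x'S /eqP x'e /forallP Hx']|none]; last first.
  by move: (none x); rewrite xS eqxx /=; move/negP; case; apply/forallP.
case: (eqVneq x' x) => [->|ne]; first by rewrite acc inE.
exfalso; have := Hx' x; rewrite xS eqxx eq_sym ne /= => h1.
have := Hx x'; rewrite x'S x'e eqxx ne /= => h2.
by apply: (sp_asym (vQ (cD x)) _ _ h2 h1); apply: domS.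
Qed.

Lemma chD_sub S x : x \in chD cD Q S -> x \in S.
Proof. by rewrite chD_mem => /andP[]. Qed.

Lemma chD_ir S x : x \in chD cD Q S -> Q (cD x) (Some x) None.
Proof. by rewrite chD_mem => /and3P[]. Qed.

Lemma chD_best S x y : x \in chD cD Q S -> y \in S -> cD y = cD x -> y != x ->
  Q (cD x) (Some x) (Some y).
Proof.
rewrite chD_mem => /and3P[_ _ /forallP Hy] yS yx ne.
by move: (Hy y); rewrite yS yx eqxx ne.
Qed.

Lemma chD_uniq S x y : x \in chD cD Q S -> y \in chD cD Q S -> cD x = cD y -> x = y.
Proof.
move=> xC yC exy; apply/eqP/negPn/negP=> ne.
have ne' : y != x by rewrite eq_sym.
have h1 := chD_best xC (chD_sub yC) (esym exy) ne'.
have h2 := chD_best yC (chD_sub xC) exy ne.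
rewrite -exy in h2.
by apply: (sp_asym (vQ (cD x)) _ _ h1 h2); apply: domS.
Qed.

Lemma chD_matching S : is_matching cD (chD cD Q S).
Proof.
move=> e; apply/card_le1_eqP => x y; rewrite !inE => /andP[xC /eqP xe] /andP[yC /eqP ye].
by apply: chD_uniq yC xC _; rewrite xe ye.
Qed.

Lemma out_some Y e x : outcome cD Y e = Some x -> x \in Y /\ cD x = e.
Proof. by rewrite /outcome; case: pickP => // x' /andP[xY /eqP xe] [<-]. Qed.

Lemma out_none Y e x : outcome cD Y e = None -> x \in Y -> cD x = e -> False.
Proof.
rewrite /outcome; case: pickP => // none _ xY xe.
by move: (none x); rewrite xY xe eqxx.
Qed.

Lemma out_in Y x : is_matching cD Y -> x \in Y -> outcome cD Y (cD x) = Some x.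
Proof.
move=> mY xY; rewrite /outcome; case: pickP => [x' /andP[x'Y /eqP x'e]|none].
  congr Some; move/card_le1_eqP: (mY (cD x)); apply; rewrite inE ?x'Y ?x'e ?xY eqxx //.
by move: (none x); rewrite xY eqxx.
Qed.

Lemma out_dom Y e : pref_dom cD e (outcome cD Y e).
Proof. by case E: outcome => [x|] //; have [_ xe] := out_some E; apply: domS. Qed.

Lemma exists_best e (T : {set C}) x0 : x0 \in T -> (forall x, x \in T -> cD x = e) ->
  exists2 x, x \in T & forall y, y \in T -> y != x -> Q e (Some x) (Some y).
Proof.
move=> x0T Te.
case: (arg_maxnP (fun x => #|[set y in T | Q e (Some x) (Some y)]|) x0T) => x xT Hmax.
exists x => // y yT yx.
have nxy : Some x != Some y by apply/eqP=> -[e']; move: yx; rewrite e' eqxx.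
case/orP: (sp_tot (vQ e) (domS (Te x xT)) (domS (Te y yT)) nxy) => // yx'.
exfalso; have := Hmax y yT; apply/negP; rewrite -ltnNge.
have sub : x |: [set y0 in T | Q e (Some x) (Some y0)] \subset [set y0 in T | Q e (Some y) (Some y0)].
  apply/subsetP=> z; rewrite in_setU1 !inE => /orP[/eqP->|/andP[zT xz]]; first by apply/andP.
  rewrite zT /=; apply: (sp_trans (vQ e) _ _ _ yx' xz); apply: domS; auto.
apply: leq_trans (subset_leq_card sub); rewrite cardsU1 inE.
by rewrite (negbTE (sp_irr (vQ e) (domS (Te x xT)))) andbF.
Qed.

Lemma chD_none S e y : outcome cD (chD cD Q S) e = None -> y \in S -> cD y = e ->
  ~~ Q e (Some y) None.
Proof.
move=> none yS ye; apply/negP=> acc.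
have yT : y \in [set z in S | cD z == e] by rewrite inE yS ye eqxx.
have Te : forall z, z \in [set z in S | cD z == e] -> cD z = e.
  by move=> z; rewrite inE => /andP[_ /eqP].
have [x xT Hx] := exists_best yT Te.
move: xT; rewrite inE => /andP[xS /eqP xe].
case: (boolP (Q e (Some x) None)) => xacc.
  have xC : x \in chD cD Q S.
    rewrite chD_mem xS xe xacc /=; apply/forallP=> z; apply/implyP=> /andP[/andP[zS /eqP ze] zx].
    by apply: Hx; rewrite // inE zS ze eqxx.
  exact: out_none none xC xe.
case: (eqVneq y x) => [yx|yx]; first by move: xacc; rewrite -yx acc.
have xy := Hx y yT yx.
by move: xacc; rewrite (sp_trans (vQ e) (domS xe) (domS ye) (domN _) xy acc).
Qed.

Lemma no_prefer S x : x \in S -> ~~ Q (cD x) (Some x) (outcome cD (chD cD Q S) (cD x)).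
Proof.
move=> xS; case E: outcome => [z|]; last exact: chD_none E xS erefl.
have [zC ze] := out_some E.
case: (eqVneq x z) => [<-|xz]; first by apply: (sp_irr (vQ (cD x))); apply: domS.
have zx := chD_best zC xS (esym ze) xz.
rewrite ze in zx; apply/negP=> xz'.
by apply: (sp_asym (vQ (cD x)) _ _ xz' zx); apply: domS.
Qed.
End Doc.

Local Notation chH := (chH cH wage B tb).

Lemma chh_restr h Y : Ch h (restrH cH h Y) = Ch h Y.
Proof. by apply: chh_ext => x xh; rewrite /restrH inE xh eqxx andbT. Qed.

Lemma chH_mem Y x : (x \in chH Y) = (x \in Ch (cH x) Y).
Proof.
apply/bigcupP/idP.
  by move=> [h _ xC]; have [_ xh] := chh_sub xC; rewrite -chh_restr xh.
by move=> xC; exists (cH x) => //; rewrite chh_restr.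
Qed.

Lemma chH_sub Y x : x \in chH Y -> x \in Y.
Proof. by rewrite chH_mem => /chh_sub []. Qed.

Lemma chH_subst T T' x : (forall y, y \in T -> y \in T') -> x \in T -> x \in chH T' -> x \in chH T.
Proof.
move=> sub xT; rewrite !chH_mem; apply: chh_subst xT => y yT _; exact: sub.
Qed.

Lemma chH_fix h Y : chH Y = Y -> Ch h (restrH cH h Y) = restrH cH h Y.
Proof.
move=> fY; apply/setP=> x; rewrite chh_restr /restrH inE.
case: (eqVneq (cH x) h) => [<-|xh]; last first.
  by rewrite andbF; apply/negP=> /chh_sub [_ /eqP]; rewrite (negbTE xh).
by rewrite -chH_mem fY andbT.
Qed.

Definition Aset (Q : profile D C) Y h := [set x | (cH x == h) &&
   ((x \in Y) || Q (cD x) (Some x) (outcome cD Y (cD x)))].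
Definition cstable (Q : profile D C) Y := [/\ is_matching cD Y,
   (forall x, x \in Y -> Q (cD x) (Some x) None) & forall h, Ch h (Aset Q Y h) = restrH cH h Y].

Section Run.
Variable Q : profile D C.
Hypothesis vQ : valid_profile cD Q.

Definition Yof Rj := chD cD Q (~: Rj).
Definition nextR Rj := Rj :|: (Yof Rj :\: chH (Yof Rj)).
Definition presv (Inv : {set C} -> Prop) :=
  forall Rj, Inv Rj -> Yof Rj != chH (Yof Rj) -> Inv (nextR Rj).

Lemma run_loop n Rj0 : (#|~: Rj0| < n)%N ->
  exists Rj, [/\ forall Inv, presv Inv -> Inv Rj0 -> Inv Rj,
     chH (Yof Rj) = Yof Rj & gda_loop cD cH wage B tb Q n Rj0 = Yof Rj].
Proof.
elim: n Rj0 => [//|n IH] Rj0 hn /=.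
rewrite -/(Yof Rj0); case: eqP => [eY|nY].
  by exists Rj0; split.
have lt : (#|~: nextR Rj0| < #|~: Rj0|)%N.
  apply: proper_card; rewrite properE; apply/andP; split.
    by apply/subsetP=> x; rewrite /nextR !inE negb_or => /andP[].
  apply/subsetPn; have : ~~ (Yof Rj0 \subset chH (Yof Rj0)).
    apply/negP=> sub; apply: nY; apply/eqP; rewrite eqEsubset sub /=.
    by apply/subsetP=> x /chH_sub.
  case/subsetPn=> x xY xZ; exists x; first by move: (chD_sub vQ xY).
  by rewrite /nextR !inE xY xZ orbT.
have [Rj [HI HF HE]] := IH (nextR Rj0) (leq_trans lt (hn : (#|~: Rj0| < n.+1)%N)).
exists Rj; split => // Inv pI I0; apply: HI => //; apply: pI => //.
by apply/eqP.
Qed.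

Lemma gda_run : exists Rj, [/\ forall Inv, presv Inv -> Inv set0 -> Inv Rj,
     chH (Yof Rj) = Yof Rj & gda cD cH wage B tb Q = Yof Rj].
Proof. by apply: run_loop; rewrite setC0 cardsT. Qed.

Lemma Yof_mono Rj Rj' x : Rj \subset Rj' -> x \in Yof Rj -> (x \in Rj') || (x \in Yof Rj').
Proof.
move=> sub xY; case: (boolP (x \in Rj')) => //= xR.
rewrite /Yof chD_mem // inE xR (chD_ir vQ xY) /=; apply/forallP=> y; apply/implyP.
move=> /andP[/andP[yR /eqP yx] ne]; apply: (chD_best vQ xY) => //.
by move: yR; rewrite !inE; apply: contra; apply: (subsetP sub).
Qed.

Lemma gda_cstable : cstable Q (gda cD cH wage B tb Q).
Proof.
pose I1 Rj := forall x, x \in Rj -> x \notin chH (Rj :|: Yof Rj).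
have pI : presv I1.
  move=> Rj HI _ x; have sub : Rj \subset nextR Rj by apply/subsetP=> y yR; rewrite /nextR inE yR.
  have sub2 : forall y, y \in Rj :|: Yof Rj -> y \in nextR Rj :|: Yof (nextR Rj).
    move=> y; rewrite inE => /orP[yR|yY]; first by rewrite inE (subsetP sub y yR).
    by rewrite inE; apply: Yof_mono sub yY.
  rewrite /nextR inE => /orP[xR|].
    apply: contra (HI x xR); apply: chH_subst => //; by rewrite inE xR.
  rewrite inE => /andP[xZ xY]; apply: contra xZ; apply: chH_subst => // y yY.
  by apply: sub2; rewrite inE yY orbT.
have [Rj [HI HF HE]] := gda_run.
have I1R : I1 Rj by apply: HI pI _ => x; rewrite inE.
rewrite HE; set Y := Yof Rj in HF I1R *.
split.
- exact: chD_matching.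
- by move=> x; apply: chD_ir.
move=> h.
set T := Rj :|: Y.
have s1 : Ch h T \subset restrH cH h Y.
  apply/subsetP=> x xC; have [xT xh] := chh_sub xC; rewrite /restrH inE xh eqxx andbT.
  move: xT; rewrite inE => /orP[xR|//]; exfalso; move: (I1R x xR); rewrite chH_mem xh.
  by rewrite xC.
have s2 : restrH cH h Y \subset Aset Q Y h.
  by apply/subsetP=> x; rewrite /restrH /Aset !inE => /andP[-> ->].
have s3 : Aset Q Y h \subset T.
  apply/subsetP=> x; rewrite /Aset !inE => /andP[_ /orP[->|pr]]; first by rewrite orbT.
  apply/orP; left; apply/negPn/negP=> xR.
  have xR' : x \in ~: Rj by rewrite inE.
  by move: (no_prefer vQ xR'); rewrite -/(Yof Rj) -/Y pr.
have s4 : restrH cH h Y \subset T.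
  by apply/subsetP=> x; rewrite /restrH !inE => /andP[-> _]; rewrite orbT.
rewrite (sandwich (subset_trans s1 s2) s3) -(sandwich s1 s4).
exact: chH_fix.
Qed.

Lemma gda_opt Y : cstable Q Y -> forall e,
  outcome cD (gda cD cH wage B tb Q) e = outcome cD Y e \/
  Q e (outcome cD (gda cD cH wage B tb Q) e) (outcome cD Y e).
Proof.
case=> mY irY chY.
pose I3 Rj := forall x, x \in Rj -> x \notin Y /\ Q (cD x) (Some x) (outcome cD Y (cD x)).
have YofA : forall Rj, I3 Rj -> forall z, z \in Yof Rj ->
    (z \in Y) || Q (cD z) (Some z) (outcome cD Y (cD z)).
  move=> Rj HI z zY; case E: (outcome cD Y (cD z)) => [y|]; last by rewrite (chD_ir vQ zY) orbT.
  have [yY ye] := out_some E.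
  have yR : y \in ~: Rj by rewrite inE; apply/negP=> /HI []; rewrite yY.
  case: (eqVneq y z) => [<-|ne]; first by rewrite yY.
  by rewrite (chD_best vQ zY yR ye ne) orbT.
have pI : presv I3.
  move=> Rj HI _ x; rewrite /nextR inE => /orP[/HI //|].
  rewrite inE => /andP[xZ xY].
  case/orP: (YofA Rj HI x xY) => [xYY|pr]; last first.
    split => //; apply/negP=> xYY; move: pr; rewrite (out_in mY xYY).
    by rewrite (negbTE (sp_irr (vQ _) (domS erefl))).
  exfalso; move: xZ; rewrite chH_mem; apply/negP/negPn.
  apply: (chh_subst (S' := Aset Q Y (cH x))) => //.
    move=> y yY yh; rewrite /Aset inE yh eqxx /=; exact: YofA yY.
  by rewrite chY /restrH inE xYY eqxx.
have [Rj [HI HF HE]] := gda_run.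
have I3R : I3 Rj by apply: HI pI _ => x; rewrite inE.
rewrite HE => e; case E: (outcome cD Y e) => [y|]; last first.
  case E2: (outcome cD (Yof Rj) e) => [z|]; last by left.
  have [zY ze] := out_some E2; right; rewrite -ze; exact: (chD_ir vQ zY).
have [yY ye] := out_some E.
have yR : y \in ~: Rj by rewrite inE; apply/negP=> /I3R []; rewrite yY.
have np := no_prefer vQ yR; rewrite -/(Yof Rj) ye in np.
case: (eqVneq (outcome cD (Yof Rj) e) (Some y)) => [->|ne]; first by left.
right; case/orP: (sp_tot (vQ e) (out_dom _ _) (domS ye) ne) => // yo.
by move: np; rewrite yo.
Qed.
End Run.

Lemma cstable_fix Q Y h : cstable Q Y -> Ch h (restrH cH h Y) = restrH cH h Y.
Proof.
case=> _ _ chY; rewrite (sandwich (S := Aset Q Y h)) ?chY //.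
by apply/subsetP=> x; rewrite /restrH /Aset !inE => /andP[-> ->].
Qed.

Lemma stable_mono Q Q' Y : cstable Q Y -> (forall h, Aset Q' Y h \subset Aset Q Y h) ->
  (forall x, x \in Y -> Q' (cD x) (Some x) None) -> cstable Q' Y.
Proof.
case=> mY _ chY sub ir; split => // h; rewrite (sandwich (S := Aset Q Y h)) ?chY //.
by apply/subsetP=> x; rewrite /restrH /Aset !inE => /andP[-> ->].
Qed.

Lemma cardM Y : is_matching cD Y -> #|Y| = #|[set e | outcome cD Y e != None]|.
Proof.
move=> mY; have -> : [set e | outcome cD Y e != None] = cD @: Y.
  apply/setP=> e; rewrite inE; apply/idP/imsetP.
    case E: outcome => [x|] // _; have [xY xe] := out_some E; by exists x.
  by case=> x xY ->; rewrite (out_in mY xY).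
rewrite card_in_imset // => x y xY yY exy.
by move: (out_in mY xY); rewrite exy (out_in mY yY) => -[].
Qed.

Lemma cardH Y : #|Y| = (\sum_h #|restrH cH h Y|)%N.
Proof.
rewrite -sum1_card (partition_big cH xpredT) //=; apply: eq_bigr => h _.
by rewrite -sum1_card; apply: eq_bigl => x; rewrite /restrH inE.
Qed.

Lemma gda_rural Q Y : valid_profile cD Q -> cstable Q Y -> forall e,
  outcome cD (gda cD cH wage B tb Q) e != None -> outcome cD Y e != None.
Proof.
move=> vQ csY; have csS := gda_cstable vQ.
set Ys := gda cD cH wage B tb Q in csS *.
have opt := gda_opt vQ csY; rewrite -/Ys in opt.
case: (csY) => mY irY chY; case: (csS) => mS _ _.
have sub : [set e | outcome cD Y e != None] \subset [set e | outcome cD Ys e != None].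
  apply/subsetP=> e; rewrite !inE; case E: (outcome cD Y e) => [y|] // _.
  have [yY ye] := out_some E.
  case: (opt e) => [->|pr]; first by rewrite E.
  rewrite E in pr; case E2: (outcome cD Ys e) pr => [z|] // pr; exfalso.
  by apply: (sp_asym (vQ e) (domN _) (domS ye) pr); rewrite -ye; apply: irY.
have hosp : forall h, (#|restrH cH h Ys| <= #|restrH cH h Y|)%N.
  move=> h; rewrite -(cstable_fix h csS) -(chY h); apply: lad.
  apply/subsetP=> x; rewrite /restrH /Aset !inE => /andP[xS ->] /=.
  have := opt (cD x); rewrite (out_in mS xS) => -[E|pr]; last by rewrite pr orbT.
  by have [-> _] := out_some (esym E).
have : [set e | outcome cD Y e != None] == [set e | outcome cD Ys e != None].
  rewrite eqEcard sub /= -cardM // -cardM // !cardH; exact: leq_sum.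
by move/eqP=> eM e; move/setP: eM => /(_ e); rewrite !inE => ->.
Qed.

Definition cls (ok : pred (option C)) (u : option C) : nat :=
  if u is Some _ then (if ok u then 2 else 0) else 1.
Definition trunc (ok : pred (option C)) (p : rel (option C)) : rel (option C) :=
  fun u v => (cls ok v < cls ok u)%N || ((cls ok u == cls ok v) && p u v).

Lemma trunc_sp d ok p : strict_pref cD d p -> strict_pref cD d (trunc ok p).
Proof.
move=> sp; split.
- by move=> a da; rewrite /trunc ltnn eqxx /= (negbTE (sp_irr sp da)).
- move=> a b c da db dc; rewrite /trunc.
  case/orP=> [h1|/andP[/eqP e1 h1]]; case/orP=> [h2|/andP[/eqP e2 h2]].
  + by rewrite (ltn_trans h2 h1).
  + by rewrite -e2 h1.
  + by rewrite e1 h2.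
  + by rewrite e1 e2 eqxx (sp_trans sp da db dc h1 h2) orbT.
- move=> a b da db ab; rewrite /trunc.
  case: (ltngtP (cls ok b) (cls ok a)) => [h|h|e] /=; rewrite ?orbT //.
  exact: (sp_tot sp da db ab).
Qed.

Lemma truncSN (ok : pred (option C)) p x : trunc ok p (Some x) None = ok (Some x).
Proof. by rewrite /trunc /cls; case: (ok (Some x)). Qed.

Lemma truncSS (ok : pred (option C)) p x y : ok (Some x) -> ok (Some y) ->
  trunc ok p (Some x) (Some y) = p (Some x) (Some y).
Proof. by rewrite /trunc /cls => -> ->. Qed.

Lemma trunc_top (ok : pred (option C)) p u y : ok (Some y) -> trunc ok p u (Some y) ->
  p u (Some y) /\ exists2 x, u = Some x & ok (Some x).
Proof.
rewrite /trunc /cls => -> /=; case: u => [x|] //=; case E: (ok (Some x)) => //=.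
by move=> h; split => //; exists x; rewrite ?E.
Qed.

Lemma valid_update (P : profile D C) (d : D) (p : rel (option C)) : valid_profile cD P -> strict_pref cD d p ->
  valid_profile cD (update P d p).
Proof. by move=> vP sp d'; rewrite /update; case: eqP => [->|]. Qed.

Lemma updE (P : profile D C) (d : D) (p : rel (option C)) : update P d p d = p.
Proof. by rewrite /update eqxx. Qed.

Lemma updN (P : profile D C) (d : D) (p : rel (option C)) e : e != d -> update P d p e = P e.
Proof. by rewrite /update => /negbTE ->. Qed.

Theorem sp_main : strategy_proof cD (gda cD cH wage B tb).
Proof.
move=> P d p' vP sp' /=.
set Q' := update P d p'; have vQ' : valid_profile cD Q' by apply: valid_update.
set Ys := gda cD cH wage B tb P; set Y' := gda cD cH wage B tb Q'.
have csS : cstable P Ys := gda_cstable vP.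
have cs' : cstable Q' Y' := gda_cstable vQ'.
case: (csS) => mS irS _; case: (cs') => m' ir' _.
set a := outcome cD Ys d; set b := outcome cD Y' d.
case: (eqVneq a b) => [ab|nab]; first by left.
right; case/orP: (sp_tot (vP d) (out_dom _ d) (out_dom _ d) nab) => // ba; exfalso.
have aIR : a = None \/ P d a None.
  rewrite /a; case E: outcome => [xa|]; [right|by left].
  by have [xaY <-] := out_some E; apply: irS.
case Eb: (outcome cD Y' d) ba => [xb|] ba; last first.
  case: aIR => [aN|aN]; first by move: nab; rewrite /b aN Eb.
  by apply: (sp_asym (vP d) _ _ aN ba) => //; apply: out_dom.
have [xbY xbd] := out_some Eb.
set pb := trunc (fun u => u == Some xb) (P d).
set pt := trunc (fun u => P d u a) (P d).
set Qb := update P d pb; set Qt := update P d pt.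
have vQb : valid_profile cD Qb by apply: valid_update => //; apply: trunc_sp.
have vQt : valid_profile cD Qt by apply: valid_update => //; apply: trunc_sp.
have pb_top : forall u, ~~ pb u (Some xb).
  move=> u; apply/negP=> hu.
  have [pr [x ux /eqP xxb]] := trunc_top (ok := fun u => u == Some xb) (p := P d) (eqxx _) hu.
  by move: pr; rewrite ux xxb (negbTE (sp_irr (vP d) (domS xbd))).
have csb' : cstable Qb Y'.
  apply: (stable_mono cs').
    move=> h; apply/subsetP=> x; rewrite /Aset !inE => /andP[-> /=] /orP[->//|].
    case: (eqVneq (cD x) d) => [xd|xd].
      by rewrite xd /Qb updE Eb (negbTE (pb_top _)).
    by rewrite /Qb /Q' !updN // => ->; rewrite orbT.
  move=> x xY; case: (eqVneq (cD x) d) => [xd|xd].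
    have := out_in m' xY; rewrite xd Eb => -[<-].
    by rewrite /Qb updE /pb truncSN.
  by rewrite /Qb updN //; move: (ir' x xY); rewrite /Q' updN.
have db : outcome cD (gda cD cH wage B tb Qb) d != None.
  case: (gda_opt vQb csb' d) => [->|]; first by rewrite Eb.
  by rewrite Eb /Qb updE (negbTE (pb_top _)).
set Yt := gda cD cH wage B tb Qt.
have csT : cstable Qt Yt := gda_cstable vQt.
case: (csT) => mT irT _.
have dt : outcome cD Yt d = None.
  case Et: (outcome cD Yt d) => [c|] //; exfalso.
  have [cY cd] := out_some Et.
  have ca : P d (Some c) a by move: (irT c cY); rewrite cd /Qt updE /pt truncSN.
  have csP : cstable P Yt.
    apply: (stable_mono csT).
      move=> h; apply/subsetP=> x; rewrite /Aset !inE => /andP[-> /=] /orP[->//|].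
      case: (eqVneq (cD x) d) => [xd|xd]; last by rewrite /Qt updN // => ->; rewrite orbT.
      rewrite xd Et => xc; have xa : P d (Some x) a.
        by apply: (sp_trans (vP d) (domS xd) (domS cd) (out_dom _ d) xc ca).
      by rewrite /Qt updE /pt truncSS // xc orbT.
    move=> x xY; case: (eqVneq (cD x) d) => [xd|xd]; last first.
      by move: (irT x xY); rewrite /Qt updN.
    have := out_in mT xY; rewrite xd Et => -[<-].
    case: aIR => [aN|aN]; first by move: ca; rewrite aN.
    by apply: (sp_trans (vP d) _ _ _ ca aN) => //; [apply: domS | apply: out_dom].
  have := gda_opt vP csP d; rewrite -/Ys -/a Et => -[aE|ac].
    by move: ca; rewrite aE (negbTE (sp_irr (vP d) (domS cd))).
  by apply: (sp_asym (vP d) _ _ ac ca) => //; [apply: out_dom | apply: domS].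
have csbT : cstable Qb Yt.
  apply: (stable_mono csT).
    move=> h; apply/subsetP=> x; rewrite /Aset !inE => /andP[-> /=] /orP[->//|].
    case: (eqVneq (cD x) d) => [xd|xd]; last by rewrite /Qt /Qb !updN // => ->; rewrite orbT.
    rewrite xd dt /Qb updE /pb truncSN => /eqP [->].
    by apply/orP; right; rewrite /Qt updE /pt truncSN; exact: ba.
  move=> x xY; case: (eqVneq (cD x) d) => [xd|xd]; last first.
    by move: (irT x xY); rewrite /Qt /Qb !updN.
  by exfalso; apply: (out_none dt xY xd).
by move: (gda_rural vQb csbT db); rewrite dt.
Qed.

Lemma ws_restr h Y : ws h (restrH cH h Y) = ws h Y.
Proof. by apply: eq_bigl => x; rewrite /restrH inE; case: (cH x == h); rewrite ?andbF ?andbT. Qed.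

Theorem stab_main (f : H -> {set C} -> R) (gamma : H -> R) :
  (forall h, exists x, cH x = h) -> (forall h, 0 < gamma h) ->
  (forall h (Y : {set C}), {subset Y <= [pred x | cH x == h]} ->
     f h Y = gamma h * wsum cH wage h Y) ->
  forall P : profile D C, valid_profile cD P ->
     exists B' : H -> R, (forall h, B h <= B' h /\ B' h < B h + wbar cH wage h) /\
       stable cD cH wage f P B' (gda cD cH wage B tb P).
Proof.
move=> hex gpos hf P vP.
set Y := gda cD cH wage B tb P.
have csY : cstable P Y := gda_cstable vP.
case: (csY) => mY irY chY.
exists (fun h => Num.max (B h) (ws h Y)); split.
  move=> h; split; first by rewrite le_max lexx.
  rewrite gt_max; apply/andP; split.
    have [x xh] := hex h; rewrite ltrDl; apply: lt_le_trans (wpos x) _.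
    by rewrite -xh wage_wbar.
  by rewrite -ws_restr -(chY h) chh_bound.
split.
  by split => // h; rewrite le_max lexx orbT.
move=> h Z [mZ Zh Zpr fl wZ].
rewrite hf in fl; last by move=> x; rewrite /restrH inE => /andP[].
rewrite hf in fl; last by move=> x /Zh /eqP; rewrite inE.
rewrite ltr_pM2l // ws_restr in fl.
move: wZ; rewrite le_max => /orP[wZ|wZ]; last by move: (lt_le_trans fl wZ); rewrite ltxx.
have wYB := lt_le_trans fl wZ.
set A := Aset P Y h.
have ZA : forall x, x \in Z -> cH x = h -> x \in A.
  move=> x xZ xh; rewrite /A /Aset inE xh eqxx /=.
  case: (boolP (x \in Y)) => //= xY; exact: Zpr.
have wA : ws h A < B h.
  rewrite ltNge; apply/negP=> /chh_big; rewrite chY ws_restr => hB.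
  by move: (le_lt_trans hB wYB); rewrite ltxx.
have AY : forall x, x \in A -> cH x = h -> x \in Y.
  move=> x xA xh; have : x \in restrH cH h A by rewrite /restrH inE xA xh eqxx.
  by rewrite -chh_small // chY /restrH inE => /andP[].
have : ws h Z <= ws h Y by apply: ws_le => x xZ xh; apply: AY (ZA x xZ xh) xh.
by move=> le1; move: (lt_le_trans fl le1); rewrite ltxx.
Qed.
End Part1.

Theorem theorem6 (R : realFieldType) (D H C : finType)
  (cD : C -> D) (cH : C -> H) (wage : C -> R)
  (B : H -> R) (f : H -> {set C} -> R) (gamma : H -> R) (tb : C -> nat) :
  (* contracts are distinct triples (d, h, w) *)
  injective (fun x => (cD x, cH x, wage x)) ->
  (* budgets and wages: 0 < x_W <= B_{x_H}, B_h > 0 *)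
  (forall h, 0 < B h) ->
  (forall x, 0 < wage x /\ wage x <= B (cH x)) ->
  (* every hospital has some contract, so that overline{w}_h is defined *)
  (forall h, exists x, cH x = h) ->
  (* utilities proportional to total wage *)
  (forall h, 0 < gamma h) ->
  (forall h (Y : {set C}), {subset Y <= [pred x | cH x == h]} ->
     f h Y = gamma h * wsum cH wage h Y) ->
  (* fixed tie-breaking order *)
  injective tb ->
  strategy_proof cD (gda cD cH wage B tb) /\
  (forall P : profile D C, valid_profile cD P ->
     exists B' : H -> R,
       (forall h, B h <= B' h /\ B' h < B h + wbar cH wage h) /\
       stable cD cH wage f P B' (gda cD cH wage B tb P)).
Proof.
move=> _ Bpos wB hex gpos hf tbinj.
have wpos : forall x, 0 < wage x by move=> x; case: (wB x).
split; first exact: (sp_main cH wpos tbinj Bpos).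
exact: (stab_main (cD := cD) (tb := tb) wpos tbinj Bpos hex gpos hf).
Qed.
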